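(* Let $\Omega\subset\mathbb{R}^{n+m}$ be a bounded Lipschitz domain and $s\in(0,1)$. Let \[ R_s=\max_{(x,y)\in\Omega}\ \min_{(z,w)\in\partial\Omega}\left(|x-z|^s+|y-w|^s\right). \] Then $\Lambda_\infty(s)=\dfrac1{R_s}$.
   Context: Points of $\mathbb{R}^{n+m}$ are $(x,y)$, $x\in\mathbb{R}^n$, $y\in\mathbb{R}^m$. \[ [u]_{\mathcal W^{s,\infty}(\mathbb{R}^{n+m})}=\max\left\{\sup_{(x,y)\ne(z,y)}\frac{|u(x,y)-u(z,y)|}{|x-z|^s};\ \sup_{(x,y)\ne(x,w)}\frac{|u(x,y)-u(x,w)|}{|y-w|^s}\right\}, \] $\mathcal W^{s,\infty}(\mathbb{R}^{n+m})=\{u\in L^\infty(\mathbb{R}^{n+m}):[u]_{\mathcal W^{s,\infty}(\mathbb{R}^{n+m})}<\infty\}$, and $\Lambda_\infty(s)=\inf\{[u]_{\mathcal W^{s,\infty}(\mathbb{R}^{n+m})}: u\in\mathcal W^{s,\infty}(\mathbb{R}^{n+m}),\ \|u\|_{L^\infty(\Omega)}=1,\ u=0\text{ in }\mathbb{R}^{n+m}\setminus\Omega\}$. *)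

(* Defs.v *)
From HB Require Import structures.
From mathcomp Require Import all_boot all_order all_algebra.
From mathcomp Require Import all_classical all_reals all_analysis.
Set Implicit Arguments. Unset Strict Implicit. Unset Printing Implicit Defensive.
Import Order.TTheory GRing.Theory Num.Theory.
Import numFieldNormedType.Exports.
Local Open Scope classical_set_scope.
Local Open Scope ring_scope.

Section Defs.
Variable R : realType.

Definition edot (N : nat) (a b : 'rV[R]_N) : R := \sum_(i < N) a 0 i * b 0 i.
Definition enorm (N : nat) (a : 'rV[R]_N) : R := Num.sqrt (edot a a).

Definition bdry (N : nat) (O : set 'rV[R]_N) : set 'rV[R]_N :=
  closure O `\` interior O.

Definition ebounded (N : nat) (O : set 'rV[R]_N) : Prop :=
  exists M : R, forall p, O p -> enorm p <= M.

(* Bounded Lipschitz domain: nonempty, open, connected, bounded, and near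
   every boundary point p, in a ball B(p,r), O is the strict epigraph of a
   Lipschitz function over the hyperplane orthogonal to a unit vector e:
   O /\ B(p,r) = { q in B(p,r) | <q-p,e> > g(proj_{e^perp}(q-p)) }. *)
Definition lipschitz_domain (N : nat) (O : set 'rV[R]_N) : Prop :=
  [/\ O !=set0, open O, connected O, ebounded O &
   forall p, bdry O p ->
     exists (r : R) (e : 'rV[R]_N) (g : 'rV[R]_N -> R) (L : R),
       [/\ 0 < r, enorm e = 1,
           (forall a b, `|g a - g b| <= L * enorm (a - b)) &
           forall q, enorm (q - p) < r ->
             (O q <-> g ((q - p) - edot (q - p) e *: e) < edot (q - p) e)]].

Variables (n m : nat).

Definition pt (x : 'rV[R]_n) (y : 'rV[R]_m) : 'rV[R]_(n + m) := row_mx x y.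

Definition Wseminorm (s : R) (u : 'rV[R]_(n + m) -> R) : \bar R :=
  maxe
   (ereal_sup [set r | exists (x z : 'rV[R]_n) (y : 'rV[R]_m), x != z /\
       r = ((`|u (pt x y) - u (pt z y)|) / (enorm (x - z)) `^ s)%:E])
   (ereal_sup [set r | exists (x : 'rV[R]_n) (y w : 'rV[R]_m), y != w /\
       r = ((`|u (pt x y) - u (pt x w)|) / (enorm (y - w)) `^ s)%:E]).

Definition Linf_on (O : set 'rV[R]_(n + m)) (u : 'rV[R]_(n + m) -> R) : \bar R :=
  ereal_sup [set (`|u p|)%:E | p in O].

Definition Lambda_inf (O : set 'rV[R]_(n + m)) (s : R) : \bar R :=
  ereal_inf [set Wseminorm s u | u in
    [set u : 'rV[R]_(n + m) -> R |
      [/\ (exists M : R, forall p, `|u p| <= M),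
          (Wseminorm s u < +oo)%E,
          Linf_on O u = 1%E &
          forall p, ~ O p -> u p = 0]]].

Definition R_s (O : set 'rV[R]_(n + m)) (s : R) : R :=
  sup [set d | exists (x : 'rV[R]_n) (y : 'rV[R]_m), O (pt x y) /\
       d = inf [set t | exists (z : 'rV[R]_n) (w : 'rV[R]_m), bdry O (pt z w) /\
                  t = (enorm (x - z)) `^ s + (enorm (y - w)) `^ s]].

End Defs.

(* Main.v *)
Require Import Defs.
From HB Require Import structures.
From mathcomp Require Import all_boot all_order all_algebra.
From mathcomp Require Import all_classical all_reals all_analysis.
From mathcomp Require Import ring lra.
Import Order.TTheory GRing.Theory Num.Theory.
Import numFieldNormedType.Exports.
Local Open Scope classical_set_scope.
Local Open Scope ring_scope.
Set Implicit Arguments. Unset Strict Implicit. Unset Printing Implicit Defensive.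

Section Enorm.
Variables (R : realType) (N : nat).
Implicit Types (a b : 'rV[R]_N).

Lemma edot_ge0 a : 0 <= edot a a.
Proof. by apply: sumr_ge0 => i _; rewrite -expr2 sqr_ge0. Qed.

Lemma enorm_ge0 a : 0 <= enorm a.
Proof. exact: sqrtr_ge0. Qed.

Lemma enorm_sqr a : enorm a ^+ 2 = edot a a.
Proof. by rewrite sqr_sqrtr // edot_ge0. Qed.

Lemma enorm_coord a i : `|a 0 i| <= enorm a.
Proof.
rewrite -sqrtr_sqr /enorm ler_sqrt ?edot_ge0 // /edot (bigD1 i) //= expr2.
by rewrite lerDl; apply: sumr_ge0 => j _; rewrite -expr2 sqr_ge0.
Qed.

Lemma enormZ t a : enorm (t *: a) = `|t| * enorm a.
Proof.
rewrite /enorm /edot.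
have -> : \sum_(i < N) (t *: a) 0 i * (t *: a) 0 i = t ^+ 2 * \sum_(i < N) a 0 i * a 0 i.
  by rewrite mulr_sumr; apply: eq_bigr => i _; rewrite !mxE; ring.
by rewrite sqrtrM ?sqr_ge0 // sqrtr_sqr.
Qed.

Lemma enormN a : enorm (- a) = enorm a.
Proof. by rewrite -scaleN1r enormZ normrN1 mul1r. Qed.

Lemma enormB a b : enorm (a - b) = enorm (b - a).
Proof. by rewrite -enormN opprB. Qed.

Lemma enorm0P a : enorm a = 0 -> a = 0.
Proof.
move=> h; apply/rowP => i; rewrite mxE; apply/eqP; rewrite -normr_le0 -h.
exact: enorm_coord.
Qed.

Lemma edot_expand a b (A B : R) :
  edot (B *: a - A *: b) (B *: a - A *: b) =
  B ^+ 2 * edot a a - 2 * A * B * edot a b + A ^+ 2 * edot b b.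
Proof.
rewrite /edot.
have -> : \sum_(i < N) (B *: a - A *: b) 0 i * (B *: a - A *: b) 0 i =
  \sum_(i < N) (B ^+ 2 * (a 0 i * a 0 i) - 2 * A * B * (a 0 i * b 0 i)
     + A ^+ 2 * (b 0 i * b 0 i)).
  by apply: eq_bigr => i _; rewrite !mxE; ring.
by rewrite big_split /= sumrB -!mulr_sumr.
Qed.

Lemma edot_sum a b : edot (a + b) (a + b) = edot a a + 2 * edot a b + edot b b.
Proof.
rewrite /edot.
have -> : \sum_(i < N) (a + b) 0 i * (a + b) 0 i =
  \sum_(i < N) ((a 0 i * a 0 i) + 2 * (a 0 i * b 0 i) + (b 0 i * b 0 i)).
  by apply: eq_bigr => i _; rewrite !mxE; ring.
by rewrite !big_split /= -mulr_sumr.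
Qed.

Lemma cauchy_schwarz a b : edot a b <= enorm a * enorm b.
Proof.
have edot0l c : edot 0 c = 0 by rewrite /edot big1 // => i _; rewrite mxE mul0r.
have edot0r c : edot c 0 = 0 by rewrite /edot big1 // => i _; rewrite mxE mulr0.
have [A0|Apos] := eqVneq (enorm a) 0.
  by rewrite A0 mul0r (enorm0P A0) edot0l.
have [B0|Bpos] := eqVneq (enorm b) 0.
  by rewrite B0 mulr0 (enorm0P B0) edot0r.
set A := enorm a in Apos *; set B := enorm b in Bpos *.
have hA : 0 < A by rewrite lt_neqAle eq_sym Apos enorm_ge0.
have hB : 0 < B by rewrite lt_neqAle eq_sym Bpos enorm_ge0.
have ABg : 0 < A * B by rewrite mulr_gt0.
have h := edot_ge0 (B *: a - A *: b).
rewrite edot_expand -!enorm_sqr -/A -/B in h.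
nra.
Qed.

Lemma enormD a b : enorm (a + b) <= enorm a + enorm b.
Proof.
have h1 : 0 <= enorm a + enorm b by rewrite addr_ge0 ?enorm_ge0.
rewrite -(ler_pXn2r (_ : (0 < 2)%N)) ?nnegrE ?enorm_ge0 //.
rewrite enorm_sqr edot_sum -!enorm_sqr.
have := cauchy_schwarz a b; nra.
Qed.

End Enorm.

Section Misc.
Variable R : realType.

Lemma edot_row n m (x : 'rV[R]_n) (y : 'rV[R]_m) :
  edot (row_mx x y) (row_mx x y) = edot x x + edot y y.
Proof.
rewrite /edot big_split_ord /=; congr (_ + _); apply: eq_bigr => i _.
  by rewrite row_mxEl.
by rewrite row_mxEr.
Qed.

Lemma enorm_rowl n m (x : 'rV[R]_n) (y : 'rV[R]_m) : enorm x <= enorm (row_mx x y).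
Proof. by rewrite /enorm ler_sqrt ?edot_ge0 // edot_row lerDl edot_ge0. Qed.

Lemma enorm_rowr n m (x : 'rV[R]_n) (y : 'rV[R]_m) : enorm y <= enorm (row_mx x y).
Proof. by rewrite /enorm ler_sqrt ?edot_ge0 // edot_row lerDr edot_ge0. Qed.

Lemma powR_mono (s a b : R) : 0 < s -> 0 <= a -> a <= b -> a `^ s <= b `^ s.
Proof.
move=> s0 a0 ab; apply: (ge0_ler_powR (ltW s0)) => //; rewrite nnegrE //.
exact: le_trans ab.
Qed.

Lemma powR_anti_neg (r a b : R) : r <= 0 -> 0 < a -> a <= b -> b `^ r <= a `^ r.
Proof.
move=> r0 a0 ab.
have b0 : 0 < b by exact: lt_le_trans ab.
have -> : r = - (- r) by rewrite opprK.
rewrite !(powRN _ (- r)) lef_pV2 ?posrE ?powR_gt0 //.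
by apply: (@ge0_ler_powR R (- r)); rewrite ?nnegrE ?oppr_ge0 // ltW.
Qed.

Lemma powR_subadd (s a b : R) : 0 < s -> s <= 1 -> 0 <= a -> 0 <= b ->
  (a + b) `^ s <= a `^ s + b `^ s.
Proof.
move=> s0 s1 a0 b0.
have sm : s - 1 <= 0 by rewrite subr_le0.
have key (c : R) : 0 <= c -> c <= a + b -> c * (a + b) `^ (s - 1) <= c `^ s.
  move=> c0 cab; rewrite -(mulr_powRB1 c0 s0).
  have [->|cpos] := eqVneq c 0; first by rewrite !mul0r.
  apply: ler_wpM2l => //; apply: powR_anti_neg => //.
  by rewrite lt_neqAle eq_sym cpos.
rewrite -(mulr_powRB1 (addr_ge0 a0 b0) s0) mulrDl.
by apply: lerD; apply: key => //; rewrite ?lerDl ?lerDr.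
Qed.

Lemma segment_bdry N (O : set 'rV[R]_N) (p q : 'rV[R]_N) :
  open O -> O p -> ~ O q ->
  exists t : R, [/\ 0 <= t, t <= 1 & bdry O (p + t *: (q - p))].
Proof.
move=> Oo Op Oq.
pose f t : 'rV[R]_N := p + t *: (q - p).
have cf (t : R) : f x @[x --> t] --> f t.
  apply: cvgD; first exact: cvg_cst.
  by apply: cvgZr_tmp; exact: cvg_id.
pose S := [set t : R | 0 <= t <= 1 /\ forall t', 0 <= t' <= t -> O (f t')].
have f0 : f 0 = p by rewrite /f scale0r addr0.
have S0 : S 0.
  split; first by rewrite lexx ler01.
  move=> t' /andP[h1 h2]; have -> : t' = 0 by apply/eqP; rewrite eq_le h1 h2.
  by rewrite f0.
have hS : has_sup S by split; [exists 0 | exists 1 => t [/andP[]]].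
set T := sup S.
have T0 : 0 <= T by exact: sup_upper_bound.
have T1 : T <= 1 by apply: ge_sup; [exists 0 | move=> t [/andP[]]].
have key t' : 0 <= t' -> t' < T -> O (f t').
  move=> t0 tT; have := sup_adherent (_ : 0 < T - t') hS.
  rewrite subr_gt0 => /(_ tT) [e [_ Se]]; rewrite opprB addrCA subrr addr0 => te.
  by apply: Se; rewrite t0 ltW.
exists T; split => //; split.
- move=> B nB.
  have [T0'|Tpos] := eqVneq T 0.
    exists p; split => //; rewrite -f0 -T0'.
    exact: nbhs_singleton.
  have Tp : 0 < T by rewrite lt_neqAle eq_sym Tpos.
  have := cf T B nB => /nbhs_ballP [d d0 hd].
  have [dT|Td] := leP (d / 2) T.
    exists (f (T - d / 2)); split.
      by apply: key; rewrite ?subr_ge0 // ltrBlDr ltrDl divr_gt0.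
    apply: (hd (T - d / 2)); rewrite /ball /= opprB addrCA subrr addr0.
    by rewrite gtr0_norm ?divr_gt0 // ltr_pdivrMr // ltr_pMr // ltr1n.
  exists (f 0); split; first by rewrite f0.
  apply: (hd 0); rewrite /ball /= subr0 gtr0_norm //.
  apply: (lt_trans Td); by rewrite ltr_pdivrMr // ltr_pMr // ltr1n.
- have OT : O° = O by apply/interior_id.
  rewrite OT => OfT.
  have [T1'|T1n] := eqVneq T 1.
    by apply: Oq; move: OfT; rewrite /f T1' scale1r addrCA subrr addr0.
  have Tl1 : T < 1 by rewrite lt_neqAle T1n T1.
  have nO : nbhs (f T) O by move: Oo; rewrite openE => /(_ _ OfT).
  have := cf T O nO => /nbhs_ballP [d d0 hd].
  pose e := Num.min (d / 2) (1 - T).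
  have e0 : 0 < e by rewrite lt_min divr_gt0 // subr_gt0.
  have S1 : S (T + e).
    split.
      have : e <= 1 - T by rewrite ge_min lexx orbT.
      by move=> h; apply/andP; split; lra.
    move=> t' /andP[t0 te].
    have [tT|Tt] := ltP t' T; first exact: key.
    apply: (hd t'); rewrite /ball /= distrC ger0_norm ?subr_ge0 //.
    apply: (le_lt_trans (y := e)); first by rewrite lerBlDl.
    apply: (le_lt_trans (y := d / 2)); first by rewrite ge_min lexx.
    by rewrite ltr_pdivrMr // ltr_pMr // ltr1n.
  have := sup_upper_bound hS S1; rewrite -/T.
  by rewrite -lerBrDl subrr leNgt e0.
Qed.

End Misc.

Section Main.
Variables (R : realType) (n m : nat) (O : set 'rV[R]_(n + m)) (s : R).
Hypotheses (hn : (0 < n)%N) (hm : (0 < m)%N) (Oo : open O) (One : O !=set0)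
  (Ob : ebounded O) (s0 : 0 < s) (s1 : s < 1).

Definition Dset (x : 'rV[R]_n) (y : 'rV[R]_m) :=
  [set t | exists (z : 'rV[R]_n) (w : 'rV[R]_m), bdry O (pt z w) /\
                  t = (enorm (x - z)) `^ s + (enorm (y - w)) `^ s].
Definition D (x : 'rV[R]_n) (y : 'rV[R]_m) := inf (Dset x y).

Lemma enorm0 N : enorm (0 : 'rV[R]_N) = 0.
Proof. by rewrite -(scale0r (0 : 'rV[R]_N)) enormZ normr0 mul0r. Qed.

Lemma bdry_out q : bdry O q -> ~ O q.
Proof. by move=> [_ hq] Oq; apply: hq; rewrite (proj1 (interior_id O) Oo). Qed.

Lemma ptx (x z : 'rV[R]_n) (y : 'rV[R]_m) (t : R) : pt (x + t *: (z - x)) y = pt x y + t *: (pt z y - pt x y).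
Proof. by rewrite /pt opp_row_mx add_row_mx scale_row_mx add_row_mx subrr scaler0 addr0. Qed.

Lemma pty (x : 'rV[R]_n) (y w : 'rV[R]_m) (t : R) : pt x (y + t *: (w - y)) = pt x y + t *: (pt x w - pt x y).
Proof. by rewrite /pt opp_row_mx add_row_mx scale_row_mx add_row_mx subrr scaler0 addr0. Qed.

Lemma seg_aux N (x z : 'rV[R]_N) (t : R) : 0 <= t -> t <= 1 ->
  enorm (x - (x + t *: (z - x))) <= enorm (x - z).
Proof.
move=> t0 t1; rewrite opprD addrA subrr add0r enormN enormZ ger0_norm // enormB.
by rewrite -[leRHS]mul1r ler_wpM2r ?enorm_ge0.
Qed.

Lemma seg_x (x : 'rV[R]_n) (y : 'rV[R]_m) z : O (pt x y) -> ~ O (pt z y) ->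
  exists z', bdry O (pt z' y) /\ enorm (x - z') <= enorm (x - z).
Proof.
move=> Ox Oz; have [t [t0 t1 hb]] := segment_bdry Oo Ox Oz.
by exists (x + t *: (z - x)); rewrite ptx; split => //; apply: seg_aux.
Qed.

Lemma seg_y (x : 'rV[R]_n) (y : 'rV[R]_m) w : O (pt x y) -> ~ O (pt x w) ->
  exists w', bdry O (pt x w') /\ enorm (y - w') <= enorm (y - w).
Proof.
move=> Ox Oz; have [t [t0 t1 hb]] := segment_bdry Oo Ox Oz.
by exists (y + t *: (w - y)); rewrite pty; split => //; apply: seg_aux.
Qed.

Lemma bdry_ne : exists z w, bdry O (pt z w).
Proof.
have [M hM] := Ob; have [p Op] := One.
have hnm : (0 < n + m)%N by rewrite addn_gt0 hn.
pose i0 : 'I_(n + m) := Ordinal hnm.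
pose K := M + enorm p + 1.
pose q := p + K *: delta_mx 0 i0.
have Oq : ~ O q.
  move=> /hM hq.
  have e1 : q 0 i0 = p 0 i0 + K by rewrite !mxE eqxx /= mulr1.
  have h1 := enorm_coord q i0; have h2 := enorm_coord p i0.
  have Mp : enorm p <= M by exact: hM.
  move: h2; rewrite ler_norml => /andP[h2 _].
  have h3 := ler_norm (q 0 i0).
  rewrite e1 in h3 h1; rewrite /K in h1 h3.
  have h4 := le_trans h3 (le_trans h1 hq).
  move: h4 h2; generalize (p 0 i0) (enorm p) => a b; clear hM hq h1 h3 e1; lra.
have [t [_ _ hb]] := segment_bdry Oo Op Oq.
set r := p + _ *: _ in hb.
by exists (lsubmx r), (rsubmx r); rewrite /pt hsubmxK.
Qed.

Lemma Dlb (x : 'rV[R]_n) (y : 'rV[R]_m) : has_lbound (Dset x y).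
Proof. by exists 0 => _ [z [w [_ ->]]]; rewrite addr_ge0 ?powR_ge0. Qed.

Lemma Dne (x : 'rV[R]_n) (y : 'rV[R]_m) : Dset x y !=set0.
Proof. by have [z [w hb]] := bdry_ne; exists (enorm (x - z) `^ s + enorm (y - w) `^ s), z, w. Qed.

Lemma D_le (x : 'rV[R]_n) (y : 'rV[R]_m) z w : bdry O (pt z w) -> D x y <= enorm (x - z) `^ s + enorm (y - w) `^ s.
Proof. by move=> hb; apply: ge_inf; [exact: Dlb | exists z, w]. Qed.

Lemma D_ge0 (x : 'rV[R]_n) (y : 'rV[R]_m) : 0 <= D x y.
Proof. by apply: lb_le_inf; [exact: Dne | move=> _ [z [w [_ ->]]]; rewrite addr_ge0 ?powR_ge0]. Qed.

Lemma powR_tri N (a b c : 'rV[R]_N) :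
  enorm (a - c) `^ s <= enorm (a - b) `^ s + enorm (b - c) `^ s.
Proof.
apply: le_trans (powR_subadd s0 (ltW s1) (enorm_ge0 _) (enorm_ge0 _)).
apply: powR_mono => //; first exact: enorm_ge0.
by have := enormD (a - b) (b - c); rewrite addrA subrK.
Qed.

Lemma D_lipx (x z : 'rV[R]_n) (y : 'rV[R]_m) : D x y <= D z y + enorm (x - z) `^ s.
Proof.
rewrite -lerBlDr; apply: lb_le_inf; first exact: Dne.
move=> _ [z' [w' [hb ->]]]; rewrite lerBlDr.
apply: le_trans (D_le x y hb) _.
rewrite addrAC lerD2r addrC; exact: powR_tri.
Qed.

Lemma D_lipy (x : 'rV[R]_n) (y w : 'rV[R]_m) : D x y <= D x w + enorm (y - w) `^ s.
Proof.
rewrite -lerBlDr; apply: lb_le_inf; first exact: Dne.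
move=> _ [z' [w' [hb ->]]]; rewrite lerBlDr.
apply: le_trans (D_le x y hb) _.
rewrite -addrA lerD2l addrC; exact: powR_tri.
Qed.

Lemma D_outx (x : 'rV[R]_n) (y : 'rV[R]_m) z : O (pt x y) -> ~ O (pt z y) -> D x y <= enorm (x - z) `^ s.
Proof.
move=> Ox Oz; have [z' [hb hz]] := seg_x Ox Oz.
apply: le_trans (D_le x y hb) _.
rewrite subrr enorm0 powR0 ?gt_eqF // addr0.
by apply: powR_mono => //; exact: enorm_ge0.
Qed.

Lemma D_outy (x : 'rV[R]_n) (y : 'rV[R]_m) w : O (pt x y) -> ~ O (pt x w) -> D x y <= enorm (y - w) `^ s.
Proof.
move=> Ox Oz; have [w' [hb hz]] := seg_y Ox Oz.
apply: le_trans (D_le x y hb) _.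
rewrite subrr enorm0 powR0 ?gt_eqF // add0r.
by apply: powR_mono => //; exact: enorm_ge0.
Qed.

Lemma D_pos (x : 'rV[R]_n) (y : 'rV[R]_m) : O (pt x y) -> 0 < D x y.
Proof.
move=> Ox.
have : nbhs (pt x y) O by move: Oo; rewrite openE => /(_ _ Ox).
move=> /nbhs_ballP [r r0 hr].
have r0' : 0 < r by exact: r0.
apply: (@lt_le_trans _ _ (r `^ s)); first exact: powR_gt0.
apply: lb_le_inf; first exact: Dne.
move=> _ [z [w [hb ->]]].
have [h1|h1] := ltP (enorm (x - z)) r; last first.
  apply: (le_trans (y := enorm (x - z) `^ s)).
    by apply: powR_mono => //; exact: ltW.
  by rewrite lerDl powR_ge0.
have [h2|h2] := ltP (enorm (y - w)) r; last first.
  apply: (le_trans (y := enorm (y - w) `^ s)).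
    by apply: powR_mono => //; exact: ltW.
  by rewrite lerDr powR_ge0.
exfalso; apply: (bdry_out hb); apply: hr.
split => // i j; rewrite /ball /= (ord1 i).
have -> : pt x y 0 j - pt z w 0 j = (pt x y - pt z w) 0 j by rewrite !mxE.
rewrite /pt opp_row_mx add_row_mx.
rewrite -(splitK j); case: (fintype.split j) => k /=; [rewrite row_mxEl | rewrite row_mxEr].
  exact: le_lt_trans (enorm_coord _ _) h1.
exact: le_lt_trans (enorm_coord _ _) h2.
Qed.


Lemma div_dist (a b c r : R) : 0 < r -> `|a - b| <= c -> `|a / r - b / r| <= c / r.
Proof.
move=> r0 h; have ri : 0 < r^-1 by rewrite invr_gt0.
by rewrite -mulrBl normrM (gtr0_norm ri) ler_pM2r.
Qed.

Lemma div_dist0 (a c r : R) : 0 < r -> `|a| <= c -> `|a / r - 0| <= c / r.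
Proof.
move=> r0 h; have ri : 0 < r^-1 by rewrite invr_gt0.
by rewrite subr0 normrM (gtr0_norm ri) ler_pM2r.
Qed.

Lemma div_dist0' (b c r : R) : 0 < r -> `|b| <= c -> `|0 - b / r| <= c / r.
Proof. by move=> r0 h; rewrite sub0r normrN -(subr0 (b / r)); apply: div_dist0. Qed.

Lemma dist_le (a b c : R) : a <= b + c -> b <= a + c -> `|a - b| <= c.
Proof. by move=> h1 h2; rewrite ler_norml; apply/andP; split; lra. Qed.

Lemma enorm_pos N (x z : 'rV[R]_N) : x != z -> 0 < enorm (x - z) `^ s.
Proof.
move=> xz; apply: powR_gt0; rewrite lt_neqAle enorm_ge0 andbT.
apply/eqP => /esym /enorm0P /eqP; rewrite subr_eq0; exact/negP.
Qed.

Definition DS := [set d | exists (x : 'rV[R]_n) (y : 'rV[R]_m), O (pt x y) /\ d = D x y].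

Lemma RsE : R_s O s = sup DS.
Proof. by []. Qed.

Lemma DS_sup : has_sup DS.
Proof.
split.
  have [p Op] := One; exists (D (lsubmx p) (rsubmx p)), (lsubmx p), (rsubmx p).
  by rewrite /pt hsubmxK.
have [M hM] := Ob; have [z0 [w0 hb]] := bdry_ne.
exists ((M + enorm z0) `^ s + (M + enorm w0) `^ s) => _ [x [y [Oxy ->]]].
apply: le_trans (D_le x y hb) _.
have hx : enorm (x - z0) <= M + enorm z0.
  apply: le_trans (enormD _ _) _; rewrite enormN lerD2r.
  exact: le_trans (enorm_rowl x y) (hM _ Oxy).
have hy : enorm (y - w0) <= M + enorm w0.
  apply: le_trans (enormD _ _) _; rewrite enormN lerD2r.
  exact: le_trans (enorm_rowr x y) (hM _ Oxy).
by apply: lerD; apply: powR_mono => //; exact: enorm_ge0.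
Qed.

Lemma D_le_Rs x y : O (pt x y) -> D x y <= R_s O s.
Proof. by move=> Oxy; rewrite RsE; apply: sup_upper_bound; [exact: DS_sup | exists x, y]. Qed.

Lemma Rs_pos : 0 < R_s O s.
Proof.
have [p Op] := One.
have Op' : O (pt (lsubmx p) (rsubmx p)) by rewrite /pt hsubmxK.
exact: lt_le_trans (D_pos Op') (D_le_Rs Op').
Qed.

Definition u0 (p : 'rV[R]_(n + m)) : R :=
  if `[< O p >] then D (lsubmx p) (rsubmx p) / R_s O s else 0.

Lemma u0pt x y : u0 (pt x y) = if `[< O (pt x y) >] then D x y / R_s O s else 0.
Proof. by rewrite /u0 /pt row_mxKl row_mxKr. Qed.

Lemma u0_holx x z y : `|u0 (pt x y) - u0 (pt z y)| <= enorm (x - z) `^ s / R_s O s.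
Proof.
have Rp := Rs_pos; rewrite !u0pt.
have [Ox|Ox] := asboolP (O (pt x y)); have [Oz|Oz] := asboolP (O (pt z y)).
- apply: div_dist => //; apply: dist_le; first exact: D_lipx.
  by rewrite enormB; exact: D_lipx.
- apply: div_dist0 => //; rewrite ger0_norm ?D_ge0 //; exact: D_outx.
- apply: div_dist0' => //; rewrite ger0_norm ?D_ge0 // enormB; exact: D_outx.
- by rewrite subrr normr0 divr_ge0 ?powR_ge0 // ltW.
Qed.

Lemma u0_holy x y w : `|u0 (pt x y) - u0 (pt x w)| <= enorm (y - w) `^ s / R_s O s.
Proof.
have Rp := Rs_pos; rewrite !u0pt.
have [Ox|Ox] := asboolP (O (pt x y)); have [Oz|Oz] := asboolP (O (pt x w)).
- apply: div_dist => //; apply: dist_le; first exact: D_lipy.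
  by rewrite enormB; exact: D_lipy.
- apply: div_dist0 => //; rewrite ger0_norm ?D_ge0 //; exact: D_outy.
- apply: div_dist0' => //; rewrite ger0_norm ?D_ge0 // enormB; exact: D_outy.
- by rewrite subrr normr0 divr_ge0 ?powR_ge0 // ltW.
Qed.

Lemma W_u0 : (Wseminorm s u0 <= ((R_s O s)^-1)%:E)%E.
Proof.
rewrite /Wseminorm ge_max; apply/andP; split; apply: ge_ereal_sup.
  move=> _ [x [z [y [xz ->]]]]; rewrite lee_fin.
  rewrite ler_pdivrMr ?enorm_pos // mulrC; exact: u0_holx.
move=> _ [x [y [w [yw ->]]]]; rewrite lee_fin.
rewrite ler_pdivrMr ?enorm_pos // mulrC; exact: u0_holy.
Qed.

Lemma Linf_ge (e : \bar R) :
  (forall p, O p -> ((D (lsubmx p) (rsubmx p) / R_s O s)%:E <= e)%E) -> (1 <= e)%E.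
Proof.
move=> h; have Rp := Rs_pos; have [p Op] := One.
case: e h => [r| |] h; last 2 first.
- exact: leey.
- by have := h p Op.
rewrite lee_fin.
have : R_s O s <= r * R_s O s.
  rewrite {1}RsE; apply: ge_sup; first by case: DS_sup.
  move=> _ [x [y [Oxy ->]]].
  have := h _ Oxy; rewrite /pt row_mxKl row_mxKr lee_fin ler_pdivrMr //.
by rewrite -{1}(mul1r (R_s O s)) ler_pM2r.
Qed.

Lemma Linf_u0 : Linf_on O u0 = 1%E.
Proof.
have Rp := Rs_pos.
apply/eqP; rewrite eq_le; apply/andP; split.
  apply: ge_ereal_sup => _ [p Op <-]; rewrite lee_fin /u0 asboolT //.
  rewrite ger0_norm ?(divr_ge0 (D_ge0 _ _) (ltW Rp)) // ler_pdivrMr // mul1r.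
  by apply: D_le_Rs; rewrite /pt hsubmxK.
apply: Linf_ge => p Op; apply: ereal_sup_ubound; exists p => //.
by rewrite /u0 asboolT // ger0_norm // (divr_ge0 (D_ge0 _ _) (ltW Rp)).
Qed.

Lemma u0_adm : [/\ (exists M : R, forall p, `|u0 p| <= M),
          (Wseminorm s u0 < +oo)%E, Linf_on O u0 = 1%E &
          forall p, ~ O p -> u0 p = 0].
Proof.
have Rp := Rs_pos.
split.
- exists 1 => p; rewrite /u0; case: asboolP => Op; last by rewrite normr0 ler01.
  rewrite ger0_norm ?(divr_ge0 (D_ge0 _ _) (ltW Rp)) // ler_pdivrMr // mul1r.
  by apply: D_le_Rs; rewrite /pt hsubmxK.
- exact: le_lt_trans W_u0 (ltry _).
- exact: Linf_u0.
- by move=> p Op; rewrite /u0 asboolF.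
Qed.

Lemma lower (u : 'rV[R]_(n + m) -> R) : (Wseminorm s u < +oo)%E ->
  Linf_on O u = 1%E -> (forall p, ~ O p -> u p = 0) ->
  (((R_s O s)^-1)%:E <= Wseminorm s u)%E.
Proof.
move=> Wf L1 hz; have Rp := Rs_pos.
pose z1 : 'rV[R]_n := delta_mx 0 (Ordinal hn).
have z1ne : (0 : 'rV[R]_n) != z1.
  apply/eqP => /(congr1 (fun M : 'rV[R]_n => M 0 (Ordinal hn))).
  by rewrite !mxE eqxx /= => /eqP; rewrite eq_sym oner_eq0.
have W0 : (0%:E <= Wseminorm s u)%E.
  rewrite /Wseminorm le_max; apply/orP; left; apply: le_ereal_sup_tmp.
  exists ((`|u (pt 0 (0 : 'rV[R]_m)) - u (pt z1 0)| / enorm (0 - z1) `^ s)%:E).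
    by exists 0, z1, 0; split.
  by rewrite lee_fin divr_ge0 ?powR_ge0.
move: Wf W0; case hW : (Wseminorm s u) => [w| |] // _ W0.
rewrite lee_fin in W0.
have hx x z y : `|u (pt x y) - u (pt z y)| <= w * enorm (x - z) `^ s.
  have [->|xz] := eqVneq x z; first by rewrite subrr normr0 mulr_ge0 ?powR_ge0.
  have : ((`|u (pt x y) - u (pt z y)| / enorm (x - z) `^ s)%:E <= w%:E)%E.
    rewrite -hW /Wseminorm le_max; apply/orP; left; apply: ereal_sup_ubound.
    by exists x, z, y; split.
  by rewrite lee_fin ler_pdivrMr ?enorm_pos // mulrC.
have hy x y w' : `|u (pt x y) - u (pt x w')| <= w * enorm (y - w') `^ s.
  have [->|yw] := eqVneq y w'; first by rewrite subrr normr0 mulr_ge0 ?powR_ge0.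
  have : ((`|u (pt x y) - u (pt x w')| / enorm (y - w') `^ s)%:E <= w%:E)%E.
    rewrite -hW /Wseminorm le_max; apply/orP; right; apply: ereal_sup_ubound.
    by exists x, y, w'; split.
  by rewrite lee_fin ler_pdivrMr ?enorm_pos // mulrC.
have hp x y : O (pt x y) -> `|u (pt x y)| <= w * D x y.
  move=> Ox.
  have key z w' : bdry O (pt z w') ->
      `|u (pt x y)| <= w * (enorm (x - z) `^ s + enorm (y - w') `^ s).
    move=> hb; have uz := hz _ (bdry_out hb).
    have := ler_normD (u (pt x y) - u (pt z y)) (u (pt z y) - u (pt z w')).
    rewrite addrA subrK uz subr0 => h; apply: le_trans h _.
    rewrite mulrDr; apply: lerD; first exact: hx.
    by have := hy z y w'; rewrite uz.
  have [w0|wpos] := eqVneq w 0.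
    have [z [w' hb]] := bdry_ne; have := key z w' hb; by rewrite w0 !mul0r.
  have wp : 0 < w by rewrite lt_neqAle eq_sym wpos.
  rewrite mulrC -ler_pdivrMr //; apply: lb_le_inf; first exact: Dne.
  move=> _ [z [w' [hb ->]]]; rewrite ler_pdivrMr // mulrC; exact: key.
have : (1 <= (w * R_s O s)%:E)%E.
  rewrite -L1; apply: ge_ereal_sup => _ [p Op <-]; rewrite lee_fin.
  rewrite -(hsubmxK p) in Op *.
  apply: le_trans (hp _ _ Op) _; apply: ler_wpM2l => //; exact: D_le_Rs.
rewrite !lee_fin => h1.
by rewrite -[_^-1]mul1r ler_pdivrMr.
Qed.

End Main.


Theorem lemma5p1 (R : realType) (n m : nat) (hn : (0 < n)%N) (hm : (0 < m)%N)
  (Omega : set 'rV[R]_(n + m)) (s : R) :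
  lipschitz_domain Omega -> 0 < s < 1 ->
  Lambda_inf Omega s = ((R_s Omega s)^-1)%:E.
Proof.
move=> [One Oo _ Ob _] /andP[s0 s1].
rewrite /Lambda_inf; apply/eqP; rewrite eq_le; apply/andP; split.
- apply: ge_ereal_inf; exists (Wseminorm s (u0 Omega s)).
    by exists (u0 Omega s) => //; exact: (u0_adm hn Oo One Ob s0 s1).
  exact: (W_u0 hn Oo One Ob s0 s1).
- apply: le_ereal_inf_tmp => _ [u [_ Wf L1 hz] <-].
  exact: (lower hn Oo One Ob s0 Wf L1 hz).
Qed.
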